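(* There exists a block gluing tree-shift that is not strongly irreducible, and there exists a uniformly block gluing tree-shift that is not uniformly strongly irreducible.
   Context: $\Sigma=\{0,1\}$. $\Sigma^*$ is the set of finite words, with $\epsilon$ the empty word. $\Sigma^k$ is the set of words of length $k$, and $\Sigma_n=\bigcup_{0\le k\le n}\Sigma^k$. A tree is $t:\Sigma^*\to\mathcal{A}$ with $\mathcal{A}$ finite, and we write $t_x=t(x)$. A pattern $u$ is a map on a finite prefix-closed support $S(u)$. A tree-shift is $\mathsf{X}_{\mathcal{F}}$, the set of trees in which no pattern of $\mathcal{F}$ occurs at any node. A pattern is accepted by $X$ if it occurs in some $t\in X$. $B_n(X)=\{t|_{\Sigma_{n-1}}:t\in X\}$. For $w\in\Sigma^*$, $t|_{wS(v)}=v$ means $t_{wy}=v_y$ for all $y\in S(v)$. A leaf of $u$ is $w\in S(u)$ with $w0,w1\notin S(u)$. A complete prefix code (CPC) is a finite set $P\subseteq\Sigma^*\setminus\{\epsilon\}$ such that no word of $P$ is a prefix of another, and every $x$ with $|x|\ge\max_{y\in P}|y|$ has a prefix in $P$. Patterns $u,v$ are connected through $P$ if there is $t\in X$ with $t|_{S(u)}=u$ and $t|_{wxS(v)}=v$ for every leaf $w$ of $u$ and every $x\in P$. $X$ is: - block gluing if there is a CPC $P$ such that for every $n\ge1$ any $u,v\in B_n(X)$ are connected through $P$; - uniformly block gluing if this holds with $P=\Sigma^k$ for some $k\ge1$; - strongly irreducible if there is a CPC $P$ through which any two patterns accepted by $X$ are connected; - uniformly strongly irreducible if this holds with $P=\Sigma^k$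 for some $k\ge1$. *)

(* Defs.v *)
(* Binary tree-shifts: Sigma = bool (false = 0, true = 1),
   words = seq bool, the empty word is [::], w0 = rcons w false. *)
From mathcomp Require Import all_boot.
Set Implicit Arguments. Unset Strict Implicit. Unset Printing Implicit Defensive.

Definition word := seq bool.

Definition tree (A : finType) := word -> A.

(* A pattern: a finite support (given as a list of words) and labels;
   only the values of [pval] on the support matter. *)
Record pattern (A : finType) := Pattern { supp : seq word; pval : word -> A }.

Definition is_pattern (A : finType) (u : pattern A) : Prop :=
  forall x y : word, (x ++ y) \in supp u -> x \in supp u.

Definition occurs_at (A : finType) (u : pattern A) (t : tree A) (w : word) : Prop :=
  forall y, y \in supp u -> t (w ++ y) = pval u y.

Definition XF (A : finType) (F : pattern A -> Prop) : tree A -> Prop :=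
  fun t => forall u w, F u -> ~ occurs_at u t w.

Definition is_tree_shift (A : finType) (X : tree A -> Prop) : Prop :=
  exists F : pattern A -> Prop,
    (forall u, F u -> is_pattern u) /\ (forall t, X t <-> XF F t).

Definition accepted (A : finType) (X : tree A -> Prop) (u : pattern A) : Prop :=
  exists t, X t /\ occurs_at u t [::].

(* u \in B_n(X) (n >= 1): support Sigma_{n-1} and u = t|_{Sigma_{n-1}} for t in X. *)
Definition in_B (A : finType) (X : tree A -> Prop) (n : nat) (u : pattern A) : Prop :=
  (forall y : word, (y \in supp u) = (size y < n)) /\ accepted X u.

Definition leaf (A : finType) (u : pattern A) (w : word) : Prop :=
  w \in supp u /\ rcons w false \notin supp u /\ rcons w true \notin supp u.

Definition is_CPC (P : seq word) : Prop :=
  (forall x, x \in P -> x != [::]) /\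
  (forall x y, x \in P -> y \in P -> prefix x y -> x = y) /\
  (forall x : word, \max_(y <- P) size y <= size x ->
     exists2 y, y \in P & prefix y x).

Definition connected (A : finType) (X : tree A -> Prop) (P : word -> bool)
    (u v : pattern A) : Prop :=
  exists t, X t /\ occurs_at u t [::] /\
    (forall w x, leaf u w -> P x -> occurs_at v t (w ++ x)).

Definition block_gluing (A : finType) (X : tree A -> Prop) : Prop :=
  exists P : seq word, is_CPC P /\
    forall n, 1 <= n -> forall u v, in_B X n u -> in_B X n v ->
      connected X (fun x => x \in P) u v.

Definition uniformly_block_gluing (A : finType) (X : tree A -> Prop) : Prop :=
  exists k, 1 <= k /\
    forall n, 1 <= n -> forall u v, in_B X n u -> in_B X n v ->
      connected X (fun x : word => size x == k) u v.

Definition strongly_irreducible (A : finType) (X : tree A -> Prop) : Prop :=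
  exists P : seq word, is_CPC P /\
    forall u v, is_pattern u -> is_pattern v -> accepted X u -> accepted X v ->
      connected X (fun x => x \in P) u v.

Definition uniformly_strongly_irreducible (A : finType) (X : tree A -> Prop) : Prop :=
  exists k, 1 <= k /\
    forall u v, is_pattern u -> is_pattern v -> accepted X u -> accepted X v ->
      connected X (fun x : word => size x == k) u v.

(* Main.v *)
Require Import Defs.
From mathcomp Require Import all_boot.

Definition LX (t : tree bool) : Prop := forall x y : word, size x = size y -> t x = t y.

Fixpoint words (n : nat) : seq word :=
  if n is n'.+1 then [::] :: [seq b :: w | b <- [:: false; true], w <- words n']
  else [:: [::]].

Lemma words_mem n w : (w \in words n) = (size w <= n).
Proof.
elim: n w => [|n IH] [|b w] //=.
rewrite in_cons /= mem_cat cats0.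
have Hi : forall c : bool, injective (cons c) by move=> c x y [].
case: b.
- rewrite (mem_map (Hi true)) IH.
  have -> : (true :: w \in [seq false :: w0 | w0 <- words n]) = false.
    apply/negP => /mapP [? _ []] //.
  by [].
- rewrite (mem_map (Hi false)) IH.
  have -> : (false :: w \in [seq true :: w0 | w0 <- words n]) = false.
    apply/negP => /mapP [? _ []] //.
  by rewrite orbF.
Qed.

Definition FL (u : pattern bool) : Prop := is_pattern u /\
  exists x y, x \in supp u /\ y \in supp u /\ size x = size y /\ pval u x <> pval u y.

Lemma LX_shift : is_tree_shift LX.
Proof.
exists FL; split; first by move=> u [].
move=> t; split.
- move=> Ht u w [_ [x [y [Hx [Hy [Hs Hne]]]]]] Hocc.
  apply: Hne; rewrite -(Hocc x Hx) -(Hocc y Hy); apply: Ht.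
  by rewrite !size_cat Hs.
- move=> Ht x y Hs; case: (eqVneq (t x) (t y)) => // Hne.
  exfalso; apply: (Ht (Pattern (words (size x)) t) [::]).
  + split.
    * move=> a b /=; rewrite !words_mem size_cat => H.
      exact: leq_trans (leq_addr _ _) H.
    * exists x, y => /=; rewrite !words_mem Hs leqnn; do 3 split => //.
      exact/eqP.
  + by move=> z _.
Qed.

Definition u0 : pattern bool :=
  Pattern [:: [::]; [:: false]; [:: true]; [:: false; false]; [:: false; true]] (fun _ => false).
Definition v0 : pattern bool := Pattern [:: [::]; [:: false]] (fun w => w != [::]).

Lemma pat_of_all (u : pattern bool) :
  all (fun z => all (fun i => take i z \in supp u) (iota 0 (size z).+1)) (supp u) ->
  is_pattern u.
Proof.
move=> /allP H x y Hxy.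
have /allP Hall := H _ Hxy.
have := Hall (size x); rewrite take_size_cat //; apply.
by rewrite mem_iota /= size_cat ltnS leq_addr.
Qed.

Lemma u0_pat : is_pattern u0. Proof. by apply: pat_of_all. Qed.
Lemma v0_pat : is_pattern v0. Proof. by apply: pat_of_all. Qed.

Lemma u0_acc : accepted LX u0.
Proof. by exists (fun _ => false). Qed.

Lemma v0_acc : accepted LX v0.
Proof.
exists (fun w => size w != 0); split.
- by move=> x y ->.
- by move=> y; rewrite !inE => /orP [] /eqP ->.
Qed.

Lemma no_connect (P : word -> bool) y : P y -> ~ connected LX P u0 v0.
Proof.
move=> Py [t [Ht [_ Hc]]].
have L1 : leaf u0 [:: true] by [].
have L2 : leaf u0 [:: false; false] by [].
have := Hc _ _ L1 Py [:: false] isT.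
have := Hc _ _ L2 Py [::] isT.
rewrite /= cats0 => E2 E1.
have : t (true :: y ++ [:: false]) = t [:: false, false & y].
  by apply: Ht; rewrite /= size_cat addn1.
by rewrite E1 E2.
Qed.

Lemma bg (P : word -> bool) (HP : forall x, P x -> size x = 1) n :
  1 <= n -> forall u v, in_B LX n u -> in_B LX n v -> connected LX P u v.
Proof.
move=> Hn u v [Su [t1 [Ht1 Hu]]] [Sv [t2 [Ht2 Hv]]].
exists (fun z => if size z < n then t1 z else t2 (drop n z)); split; [|split].
- move=> x y Hs; rewrite Hs; case: ifP => _; first exact: Ht1.
  by apply: Ht2; rewrite !size_drop Hs.
- move=> y Hy; have := Hy; rewrite Su => ->; exact: Hu.
- move=> w x [Hw [Hw0 _]] Px y Hy.
  have Hx := HP _ Px.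
  move: Hw Hw0; rewrite !Su size_rcons -leqNgt => Hw1 Hw2.
  have Hsw : size (w ++ x) = n by rewrite size_cat Hx addn1; apply/eqP; rewrite eqn_leq Hw1 Hw2.
  rewrite size_cat Hsw ltnNge leq_addr /= -Hsw drop_size_cat //.
  exact: Hv.
Qed.

Lemma P1_CPC : is_CPC [:: [:: false]; [:: true]].
Proof.
split; [|split].
- by move=> x; rewrite !inE => /orP [] /eqP ->.
- by move=> x y; rewrite !inE => /orP [] /eqP -> /orP [] /eqP ->.
- move=> [|b x] H; first by rewrite !big_cons big_nil in H.
  exists [:: b]; first by clear H; case: b.
  by rewrite prefix_cons eqxx prefix0s.
Qed.

Theorem corollary3p11 :
  (exists (A : finType) (X : tree A -> Prop),
      is_tree_shift X /\ block_gluing X /\ ~ strongly_irreducible X) /\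
  (exists (A : finType) (X : tree A -> Prop),
      is_tree_shift X /\ uniformly_block_gluing X /\ ~ uniformly_strongly_irreducible X).
Proof.
split; exists bool, LX; (split; first exact: LX_shift); split.
- exists [:: [:: false]; [:: true]]; split; first exact: P1_CPC.
  apply: bg => x; by rewrite !inE => /orP [] /eqP ->.
- move=> [P [[_ [_ HP]] Hc]].
  have [y Py _] := HP (nseq (\max_(y <- P) size y) false) (eq_leq (esym (size_nseq _ _))).
  exact: (@no_connect (fun x => x \in P) y Py (Hc _ _ u0_pat v0_pat u0_acc v0_acc)).
- by exists 1; split => //; apply: bg => x; move/eqP.
- move=> [k [Hk Hc]].
  have Py : (fun x : word => size x == k) (nseq k false) by rewrite /= size_nseq.
  exact: (@no_connect (fun x : word => size x == k) _ Py (Hc _ _ u0_pat v0_pat u0_acc v0_acc)).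
Qed.
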